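(* Let $n\geqslant 1$ and $m\geqslant 0$ be integers, and let $$P(x_1,\ldots,x_n)=\sum_{\substack{j_1,\ldots,j_n\geqslant 0\\ j_1+\cdots+j_n=m}} c_{j_1,\ldots,j_n}x_1^{j_1}\cdots x_n^{j_n}\in\mathbb{C}[x_1,\ldots,x_n]$$ and $$P^*(x_1,\ldots,x_n)=\sum_{\substack{j_1,\ldots,j_n\geqslant 0\\ j_1+\cdots+j_n=m}} c_{j_1,\ldots,j_n}(x_1)_{j_1}\cdots(x_n)_{j_n}.$$ Suppose $P\neq 0$ and $\deg P\leqslant k_1+\cdots+k_n$ where $k_1,\ldots,k_n$ are nonnegative integers. Then the coefficient of $x_1^{k_1}\cdots x_n^{k_n}$ in $$P(x_1,\ldots,x_n)(x_1+\cdots+x_n)^{k_1+\cdots+k_n-\deg P}$$ equals $$\frac{\left(\sum_{i=1}^n k_i-\deg P\right)!}{k_1!\cdots k_n!}\,P^*(k_1,\ldots,k_n).$$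
   Context: $(x)_0=1$ and $(x)_r=x(x-1)\cdots(x-r+1)$ for positive integers $r$ (falling factorial). *)

(* Defs.v *)
From HB Require Import structures.
From mathcomp Require Import all_boot all_order all_algebra.
From mathcomp Require Import mpoly.
From mathcomp.real_closed Require Import complex.
From mathcomp.reals_stdlib Require Import Rstruct.
Set Implicit Arguments. Unset Strict Implicit. Unset Printing Implicit Defensive.
Import Order.TTheory GRing.Theory Num.Theory.
Local Open Scope ring_scope.

Definition CC : Type := complex Rdefinitions.R.

Definition ffX {R : comRingType} {n : nat} (l : 'I_n) (r : nat) : {mpoly R[n]} :=
  \prod_(i < r) ('X_l - (i%:R)%:MP).

Definition Ppoly {R : comRingType} (n m : nat) (c : 'X_{1..n < m.+1} -> R)
  : {mpoly R[n]} :=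
  \sum_(j : 'X_{1..n < m.+1} | mdeg j == m) c j *: 'X_[j].

Definition Pstar {R : comRingType} (n m : nat) (c : 'X_{1..n < m.+1} -> R)
  : {mpoly R[n]} :=
  \sum_(j : 'X_{1..n < m.+1} | mdeg j == m) c j *: \prod_(l < n) ffX l (j l).

Definition tdeg {R : ringType} {n : nat} (p : {mpoly R[n]}) : nat := (msize p).-1.

(* Main.v *)
Require Import Defs.
From HB Require Import structures.
From mathcomp Require Import all_boot all_order all_algebra.
From mathcomp Require Import mpoly.
From mathcomp Require Import ring.
From mathcomp.real_closed Require Import complex.
From mathcomp.reals_stdlib Require Import Rstruct.
Import Order.TTheory GRing.Theory Num.Theory.
Local Open Scope ring_scope.

Lemma coefMX_gen (R : comNzRingType) (n : nat) (p : {mpoly R[n]}) (m k : 'X_{1..n}) :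
  (p * 'X_[m])@_k = if (m <= k)%MM then p@_(k - m)%MM else 0.
Proof.
case: ifP => h.
  by rewrite -{1}(submK h) addmC mcoeffMX.
apply/eqP; rewrite mcoeff_eq0 (perm_mem (msuppMX p m)); apply/mapP => -[m' _ e].
by move: h; rewrite e lem_addr.
Qed.

Lemma ffX_eval (R : comNzRingType) (n : nat) (l : 'I_n) (r : nat) (v : 'I_n -> nat) :
  (ffX l r : {mpoly R[n]}).@[fun i => (v i)%:R] = ((v l) ^_ r)%:R.
Proof.
rewrite /ffX; elim: r => [|r IH]; first by rewrite big_ord0 meval1 ffactn0.
rewrite big_ord_recr /= mevalM IH mevalB mevalXU mevalC ffactnSr natrM.
case: (leqP r (v l)) => h; first by rewrite natrB.
by rewrite ffact_small // !mul0r.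
Qed.

Lemma multinom_coef (R : comNzRingType) (n d : nat) (e : 'X_{1..n}) :
  mdeg e = d ->
  ((\sum_(i < n) 'X_i : {mpoly R[n]}) ^+ d)@_e * (\prod_(i < n) (e i)`!)%:R
  = (d`!)%:R.
Proof.
elim: d e => [|d IH] e hd.
  have /eqP -> : e == 0%MM by rewrite -mdeg_eq0 hd.
  rewrite expr0 mcoeff1 eqxx mul1r.
  by rewrite (eq_bigr (fun _ => 1%N)) ?big1_eq // => i _; rewrite mnm0E.
rewrite exprSr mulr_sumr raddf_sum /= mulr_suml.
rewrite (eq_bigr (fun i : 'I_n => (e i)%:R * (d`!)%:R)); last first.
  move=> i _; rewrite coefMX_gen lep1mP.
  case: eqP => [-> | /eqP hi]; first by rewrite mul0r mul0r.
  have hle : (U_(i) <= e)%MM by rewrite lep1mP.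
  have hd' : mdeg (e - U_(i))%MM = d.
    by apply/eqP; rewrite -(eqn_add2r 1) -(mdeg1 i) -mdegD submK // hd mdeg1 addn1.
  rewrite /= -(IH _ hd') mulrCA -natrM; congr (_ * _%:R).
  rewrite (bigD1 i) //= [in RHS](bigD1 i) //= mulnA; congr (_ * _).
    by rewrite mnmBE mnm1E eqxx subn1; case: (e i) hi => // q _; rewrite factS.
  by apply: eq_bigr => l hl; rewrite mnmBE mnm1E eq_sym (negbTE hl) subn0.
by rewrite -mulr_suml -natr_sum -mdegE hd -natrM factS.
Qed.

Theorem lemma2p1 (n m : nat) (c : 'X_{1..n < m.+1} -> CC) (k : 'X_{1..n}) :
  (1 <= n)%N ->
  Ppoly c != 0 ->
  (tdeg (Ppoly c) <= mdeg k)%N ->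
  (Ppoly c * (\sum_(i < n) 'X_i) ^+ (mdeg k - tdeg (Ppoly c))%N)@_k =
    ((mdeg k - tdeg (Ppoly c))`!)%:R / (\prod_(i < n) (k i)`!)%:R
      * (Pstar c).@[fun i => (k i)%:R].
Proof.
move=> _ nz _.
have hom : Ppoly c \is m.-homog.
  rewrite /Ppoly; apply: rpred_sum => j /eqP hj; apply: dhomogZ.
  by rewrite dhomogX; apply/eqP.
have tdm : tdeg (Ppoly c) = m := dhomog_uniq nz (dhomog_msize hom) hom.
rewrite tdm; set d := (mdeg k - m)%N.
rewrite /Ppoly /Pstar mulr_suml raddf_sum raddf_sum mulr_sumr /=.
apply: eq_bigr => j /eqP hj.
rewrite -scalerAl mcoeffZ mevalZ [X in (X@__)]mulrC coefMX_gen.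
rewrite (big_morph _ (mevalM _) (meval1 _)).
rewrite (eq_bigr (fun l => ((k l) ^_ (j l))%:R)); last by move=> l _; apply: ffX_eval.
rewrite -natr_prod.
have kf0 : (\prod_(i < n) (k i)`!)%:R != 0 :> CC.
  by rewrite pnatr_eq0 -lt0n prodn_gt0 // => i; rewrite fact_gt0.
case: ifP => hle.
  have hdj : mdeg (k - j)%MM = d.
    by rewrite /d; have := mdegD (k - j) j; rewrite submK // hj => ->; rewrite addnK.
  have M := @multinom_coef CC _ _ _ hdj.
  have hB : (\prod_(i < n) (k i)`! = (\prod_(i < n) (k i ^_ j i)) * \prod_(i < n) ((k - j)%MM i)`!)%N.
    rewrite -big_split /=; apply: eq_bigr => l _.
    by rewrite mnmBE ffact_fact //; move/mnm_lepP: hle.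
  have hA : (\prod_(i < n) ((k - j)%MM i)`!)%:R != 0 :> CC.
    by rewrite pnatr_eq0 -lt0n prodn_gt0 // => i; rewrite fact_gt0.
  have hC : (\prod_(i < n) (k i ^_ j i))%:R != 0 :> CC.
    by move: kf0; rewrite hB natrM mulf_eq0 negb_or => /andP[].
  move: kf0; rewrite -M hB natrM => kf0.
  field.
  by rewrite hA hC.
have [l hl] : exists l, (k l < j l)%N.
  case: (boolP [exists l, (k l < j l)%N]) => [/existsP [l hl] | /existsPn hn].
    by exists l.
  move: hle; suff -> : (j <= k)%MM by [].
  by apply/mnm_lepP => l; move: (hn l); rewrite -leqNgt.
by rewrite [\prod_(i < n) _ ^_ _](bigD1 l) //= ffact_small // !(mul0n, mulr0).
Qed.
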